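(* Let $f(t)=t^6+r_1t^5+r_2t^4+r_3t^3+r_4t^2+r_5t+r_6\in\mathbb{R}[t]$ and suppose that all roots of $f$ (counted in $\mathbb{C}$) are real and strictly positive. Then: (1) $r_1<0$; (2) $r_2>0$ and $r_2\le \frac{5}{12}r_1^2$; (3) $r_3<0$ and, writing $D=25r_1^2-60r_2$ (which is $\ge 0$ by (2)), $$-\tfrac13 r_1^2\sqrt{D}+\tfrac{1}{225}D^{3/2}+\tfrac45 r_2\sqrt{D}\;\le\;\tfrac{10}{9}r_1^3-4r_1r_2+6r_3\;\le\;\tfrac13 r_1^2\sqrt{D}-\tfrac{1}{225}D^{3/2}-\tfrac45 r_2\sqrt{D};$$ (4) $r_4>0$; (5) $r_5<0$. *)

(* Defs.v *)
From mathcomp Require Import all_boot all_order all_algebra.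
From mathcomp Require Export complex.
Set Implicit Arguments. Unset Strict Implicit. Unset Printing Implicit Defensive.
Import Order.TTheory GRing.Theory Num.Theory.
Local Open Scope ring_scope.

Definition sextic (R : rcfType) (r1 r2 r3 r4 r5 r6 : R) : {poly R} :=
  'X^6 + r1 *: 'X^5 + r2 *: 'X^4 + r3 *: 'X^3 + r4 *: 'X^2 + r5 *: 'X + r6%:P.

(* Main.v *)
Require Import Defs.
From mathcomp Require Import all_boot all_order all_algebra.
From mathcomp Require Import complex ring lra.
Set Implicit Arguments. Unset Strict Implicit. Unset Printing Implicit Defensive.
Import Order.TTheory GRing.Theory Num.Theory.
Local Open Scope ring_scope.

Section Core.
Variable R : rcfType.

Definition E1 x1 x2 x3 x4 x5 x6 : R := (x1 + x2 + x3 + x4 + x5 + x6).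
Definition E2 x1 x2 x3 x4 x5 x6 : R := (x1*x2 + x1*x3 + x1*x4 + x1*x5 + x1*x6 + x2*x3 + x2*x4 + x2*x5 + x2*x6 + x3*x4 + x3*x5 + x3*x6 + x4*x5 + x4*x6 + x5*x6).
Definition E3 x1 x2 x3 x4 x5 x6 : R := (x1*x2*x3 + x1*x2*x4 + x1*x2*x5 + x1*x2*x6 + x1*x3*x4 + x1*x3*x5 + x1*x3*x6 + x1*x4*x5 + x1*x4*x6 + x1*x5*x6 + x2*x3*x4 + x2*x3*x5 + x2*x3*x6 + x2*x4*x5 + x2*x4*x6 + x2*x5*x6 + x3*x4*x5 + x3*x4*x6 + x3*x5*x6 + x4*x5*x6).
Definition E4 x1 x2 x3 x4 x5 x6 : R := (x1*x2*x3*x4 + x1*x2*x3*x5 + x1*x2*x3*x6 + x1*x2*x4*x5 + x1*x2*x4*x6 + x1*x2*x5*x6 + x1*x3*x4*x5 + x1*x3*x4*x6 + x1*x3*x5*x6 + x1*x4*x5*x6 + x2*x3*x4*x5 + x2*x3*x4*x6 + x2*x3*x5*x6 + x2*x4*x5*x6 + x3*x4*x5*x6).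
Definition E5 x1 x2 x3 x4 x5 x6 : R := (x1*x2*x3*x4*x5 + x1*x2*x3*x4*x6 + x1*x2*x3*x5*x6 + x1*x2*x4*x5*x6 + x1*x3*x4*x5*x6 + x2*x3*x4*x5*x6).
Definition E6 x1 x2 x3 x4 x5 x6 : R := (x1*x2*x3*x4*x5*x6).

Ltac pos := rewrite /E1 /E2 /E3 /E4 /E5 /E6;
  repeat (apply: addr_gt0 || apply: mulr_gt0); assumption.

Lemma key_bound (y1 y2 y3 y4 y5 y6 b : R) :
  y1 + y2 + y3 + y4 + y5 + y6 = 0 -> 0 <= b ->
  900 * b ^+ 2 = 30 * (y1^+2 + y2^+2 + y3^+2 + y4^+2 + y5^+2 + y6^+2) ->
  0 <= (y1 - b)^+2 * (5 * b + y1) + (y2 - b)^+2 * (5 * b + y2) + (y3 - b)^+2 * (5 * b + y3)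
     + (y4 - b)^+2 * (5 * b + y4) + (y5 - b)^+2 * (5 * b + y5) + (y6 - b)^+2 * (5 * b + y6).
Proof.
move=> hs hb hp.
have hy : forall y z1 z2 z3 z4 z5 : R, y + z1 + z2 + z3 + z4 + z5 = 0 ->
   900 * b ^+ 2 = 30 * (y^+2 + z1^+2 + z2^+2 + z3^+2 + z4^+2 + z5^+2) ->
   0 <= (y - b)^+2 * (5 * b + y).
  move=> y z1 z2 z3 z4 z5 hs' hp'.
  apply: mulr_ge0; first exact: sqr_ge0.
  have hyz : y = - (z1 + z2 + z3 + z4 + z5) by rewrite -[LHS]subr0 -hs'; ring.
  rewrite {}hyz in hp' *.
  have hsq : 0 <= (z1-z2)^+2 + (z1-z3)^+2 + (z1-z4)^+2 + (z1-z5)^+2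
      + (z2-z3)^+2 + (z2-z4)^+2 + (z2-z5)^+2 + (z3-z4)^+2 + (z3-z5)^+2 + (z4-z5)^+2.
    by repeat apply: addr_ge0; exact: sqr_ge0.
  have h2 : (z1 + z2 + z3 + z4 + z5) ^+ 2 <= 25 * b ^+ 2 by lra.
  nra.
have := hy y1 y2 y3 y4 y5 y6 ltac:(lra) ltac:(lra).
have := hy y2 y1 y3 y4 y5 y6 ltac:(lra) ltac:(lra).
have := hy y3 y1 y2 y4 y5 y6 ltac:(lra) ltac:(lra).
have := hy y4 y1 y2 y3 y5 y6 ltac:(lra) ltac:(lra).
have := hy y5 y1 y2 y3 y4 y6 ltac:(lra) ltac:(lra).
have := hy y6 y1 y2 y3 y4 y5 ltac:(lra) ltac:(lra).
lra.
Qed.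

Lemma sumG y1 y2 y3 y4 y5 y6 (b : R) : (y1 - b)^+2 * (5 * b + y1) + (y2 - b)^+2 * (5 * b + y2) + (y3 - b)^+2 * (5 * b + y3) + (y4 - b)^+2 * (5 * b + y4) + (y5 - b)^+2 * (5 * b + y5) + (y6 - b)^+2 * (5 * b + y6) = (y1^+3 + y2^+3 + y3^+3 + y4^+3 + y5^+3 + y6^+3) + 3 * b * (y1^+2 + y2^+2 + y3^+2 + y4^+2 + y5^+2 + y6^+2) - 9 * b^+2 * (y1 + y2 + y3 + y4 + y5 + y6) + 30 * b^+3.
Proof. ring. Qed.
Lemma sumH y1 y2 y3 y4 y5 y6 (b : R) : (-y1 - b)^+2 * (5 * b + -y1) + (-y2 - b)^+2 * (5 * b + -y2) + (-y3 - b)^+2 * (5 * b + -y3) + (-y4 - b)^+2 * (5 * b + -y4) + (-y5 - b)^+2 * (5 * b + -y5) + (-y6 - b)^+2 * (5 * b + -y6) = - (y1^+3 + y2^+3 + y3^+3 + y4^+3 + y5^+3 + y6^+3) + 3 * b * (y1^+2 + y2^+2 + y3^+2 + y4^+2 + y5^+2 + y6^+2) + 9 * b^+2 * (y1 + y2 + y3 + y4 + y5 + y6) + 30 * b^+3.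
Proof. ring. Qed.

Lemma fin (e1 e2 e3 S p3 : R) : S^+2 = 25 * (-e1) ^+ 2 - 60 * e2 -> 0 <= S ->
  0 <= p3 + 3 * (S/30) * (5/6 * e1 ^+ 2 - 2 * e2) - 9 * (S/30)^+2 * 0 + 30 * (S/30)^+3 ->
  0 <= - p3 + 3 * (S/30) * (5/6 * e1 ^+ 2 - 2 * e2) + 9 * (S/30)^+2 * 0 + 30 * (S/30)^+3 ->
  p3 = 5/9 * e1 ^+ 3 - 2 * e1 * e2 + 3 * e3 ->
  let D := 25 * (-e1) ^+ 2 - 60 * e2 in
      (- (1/3) * (-e1) ^+ 2 * S + 1/225 * (D * S) + 4/5 * e2 * S
         <= 10/9 * (-e1) ^+ 3 - 4 * (-e1) * e2 + 6 * (-e3)) /\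
      (10/9 * (-e1) ^+ 3 - 4 * (-e1) * e2 + 6 * (-e3)
         <= 1/3 * (-e1) ^+ 2 * S - 1/225 * (D * S) - 4/5 * e2 * S).
Proof.
move=> hS hS0 K1 K2 hp3 D.
have i1 : (10/9 * (-e1) ^+ 3 - 4 * (-e1) * e2 + 6 * (-e3)) - (- (1/3) * (-e1) ^+ 2 * S + 1/225 * (D * S) + 4/5 * e2 * S) = 2 * (- p3 + 3 * (S/30) * (5/6 * e1 ^+ 2 - 2 * e2) + 9 * (S/30)^+2 * 0 + 30 * (S/30)^+3) + S/450 * (D - S^+2).
  by rewrite /D hp3; field.
have i2 : (1/3 * (-e1) ^+ 2 * S - 1/225 * (D * S) - 4/5 * e2 * S) - (10/9 * (-e1) ^+ 3 - 4 * (-e1) * e2 + 6 * (-e3)) = 2 * (p3 + 3 * (S/30) * (5/6 * e1 ^+ 2 - 2 * e2) - 9 * (S/30)^+2 * 0 + 30 * (S/30)^+3) + S/450 * (D - S^+2).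
  by rewrite /D hp3; field.
have hz : D - S^+2 = 0 by rewrite /D hS subrr.
rewrite hz mulr0 addr0 in i1 i2.
rewrite !mulr0 !addr0 ?subr0 in i1 i2 K1 K2.
split; rewrite -subr_ge0; [rewrite i1|rewrite i2]; apply: mulr_ge0 => //.
Qed.

Lemma core x1 x2 x3 x4 x5 x6 r1 r2 r3 r4 r5 :
  0 < x1 -> 0 < x2 -> 0 < x3 -> 0 < x4 -> 0 < x5 -> 0 < x6 ->
  r1 = - E1 x1 x2 x3 x4 x5 x6 -> r2 = E2 x1 x2 x3 x4 x5 x6 ->
  r3 = - E3 x1 x2 x3 x4 x5 x6 -> r4 = E4 x1 x2 x3 x4 x5 x6 ->
  r5 = - E5 x1 x2 x3 x4 x5 x6 ->
  let D := 25 * r1 ^+ 2 - 60 * r2 in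
  [/\ r1 < 0,
      0 < r2 /\ r2 <= 5 / 12 * r1 ^+ 2,
      r3 < 0 /\
      (- (1/3) * r1 ^+ 2 * Num.sqrt D + 1/225 * (D * Num.sqrt D) + 4/5 * r2 * Num.sqrt D
         <= 10/9 * r1 ^+ 3 - 4 * r1 * r2 + 6 * r3) /\
      (10/9 * r1 ^+ 3 - 4 * r1 * r2 + 6 * r3
         <= 1/3 * r1 ^+ 2 * Num.sqrt D - 1/225 * (D * Num.sqrt D) - 4/5 * r2 * Num.sqrt D),
      0 < r4
    & r5 < 0].
Proof.
move=> h1 h2 h3 h4 h5 h6 -> -> -> -> -> D.
set m := E1 x1 x2 x3 x4 x5 x6 / 6.
have hsq : 0 <= (x1 - m)^+2 + (x2 - m)^+2 + (x3 - m)^+2 + (x4 - m)^+2 + (x5 - m)^+2 + (x6 - m)^+2.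
  by repeat apply: addr_ge0; exact: sqr_ge0.
have hDe : D = 30 * ((x1 - m)^+2 + (x2 - m)^+2 + (x3 - m)^+2 + (x4 - m)^+2 + (x5 - m)^+2 + (x6 - m)^+2).
  by rewrite /D /m /E1 /E2; field.
have hD : 0 <= D by rewrite hDe; lra.
set S := Num.sqrt D.
have hS : S ^+ 2 = D by rewrite sqr_sqrtr.
have hS0 : 0 <= S by exact: sqrtr_ge0.
have hsum : (x1 - m) + (x2 - m) + (x3 - m) + (x4 - m) + (x5 - m) + (x6 - m) = 0.
  by rewrite /m /E1; field.
have hb : 900 * (S/30) ^+ 2 = 30 * ((x1 - m)^+2 + (x2 - m)^+2 + (x3 - m)^+2 + (x4 - m)^+2 + (x5 - m)^+2 + (x6 - m)^+2).
  by rewrite -hDe -hS; field.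
have hb0 : 0 <= S / 30 by apply: divr_ge0 => //; exact: ler0n.
have hsumN : -(x1 - m) + -(x2 - m) + -(x3 - m) + -(x4 - m) + -(x5 - m) + -(x6 - m) = 0.
  by rewrite -!opprD hsum oppr0.
have hbN : 900 * (S/30) ^+ 2 = 30 * ((-(x1 - m))^+2 + (-(x2 - m))^+2 + (-(x3 - m))^+2 + (-(x4 - m))^+2 + (-(x5 - m))^+2 + (-(x6 - m))^+2).
  by rewrite !sqrrN.
have K1 := key_bound hsum hb0 hb.
have K2 := key_bound hsumN hb0 hbN.
split.
- rewrite oppr_lt0; pos.
- split; first pos.
  move: hsq; rewrite /m /E1 /E2; lra.
- split; first (rewrite oppr_lt0; pos).
  have hp2 : (x1 - m)^+2 + (x2 - m)^+2 + (x3 - m)^+2 + (x4 - m)^+2 + (x5 - m)^+2 + (x6 - m)^+2 = 5/6 * E1 x1 x2 x3 x4 x5 x6 ^+ 2 - 2 * E2 x1 x2 x3 x4 x5 x6.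
    by rewrite /m /E1 /E2; field.
  have hp3 : (x1 - m)^+3 + (x2 - m)^+3 + (x3 - m)^+3 + (x4 - m)^+3 + (x5 - m)^+3 + (x6 - m)^+3 = 5/9 * E1 x1 x2 x3 x4 x5 x6 ^+ 3 - 2 * E1 x1 x2 x3 x4 x5 x6 * E2 x1 x2 x3 x4 x5 x6 + 3 * E3 x1 x2 x3 x4 x5 x6.
    by rewrite /m /E1 /E2 /E3; field.
  rewrite sumG hsum hp2 hp3 in K1.
  rewrite sumH hsum hp2 hp3 in K2.
  exact: fin hS hS0 K1 K2 (erefl _).
- pos.
- rewrite oppr_lt0; pos.
Qed.


Lemma sextic_coef (r1 r2 r3 r4 r5 r6 : R) :
  let p := sextic r1 r2 r3 r4 r5 r6 in
  p`_6 = 1 /\ p`_5 = r1 /\ p`_4 = r2 /\ p`_3 = r3 /\ p`_2 = r4 /\ p`_1 = r5 /\ p`_0 = r6.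
Proof. by rewrite /= /sextic !coefE /=; do ! split; ring. Qed.

Lemma sextic_high (r1 r2 r3 r4 r5 r6 : R) j : (7 <= j)%N ->
  (sextic r1 r2 r3 r4 r5 r6)`_j = 0.
Proof.
move=> hj; have e k : (k < 7)%N -> (j == k) = false.
  by move=> hk; apply: gtn_eqF; exact: leq_trans hk hj.
by rewrite /sextic !coefE !e // !mulr0 !addr0.
Qed.

Lemma sextic_size (r1 r2 r3 r4 r5 r6 : R) : size (sextic r1 r2 r3 r4 r5 r6) = 7%N.
Proof.
have [h6 _] := sextic_coef r1 r2 r3 r4 r5 r6.
apply/eqP; rewrite eqn_leq; apply/andP; split.
  by apply/leq_sizeP => j; exact: sextic_high.
rewrite ltnNge; apply/negP => /leq_sizeP /(_ 6%N (leqnn _)).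
by rewrite h6 => /eqP; rewrite oner_eq0.
Qed.

Lemma sextic_inj (a1 a2 a3 a4 a5 a6 b1 b2 b3 b4 b5 b6 : R) :
  sextic a1 a2 a3 a4 a5 a6 = sextic b1 b2 b3 b4 b5 b6 ->
  a1 = b1 /\ a2 = b2 /\ a3 = b3 /\ a4 = b4 /\ a5 = b5.
Proof.
move=> e.
have [_ [? [? [? [? [? ?]]]]]] := sextic_coef a1 a2 a3 a4 a5 a6.
have [_ [? [? [? [? [? ?]]]]]] := sextic_coef b1 b2 b3 b4 b5 b6.
do ! split; congruence.
Qed.

Lemma prod6 x1 x2 x3 x4 x5 x6 :
  \prod_(x <- [:: x1; x2; x3; x4; x5; x6]) ('X - x%:P) =
  sextic (- E1 x1 x2 x3 x4 x5 x6) (E2 x1 x2 x3 x4 x5 x6) (- E3 x1 x2 x3 x4 x5 x6)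
         (E4 x1 x2 x3 x4 x5 x6) (- E5 x1 x2 x3 x4 x5 x6) (E6 x1 x2 x3 x4 x5 x6).
Proof.
rewrite !big_cons big_nil mulr1 /sextic /E1 /E2 /E3 /E4 /E5 /E6 -!mul_polyC.
rewrite !(polyCN, polyCD, polyCM).
ring.
Qed.

End Core.

Theorem mainTheorem1 (R : rcfType) (r1 r2 r3 r4 r5 r6 : R) :
  (forall z : R[i], root (map_poly (real_complex R) (sextic r1 r2 r3 r4 r5 r6)) z ->
     complex.Im z = 0 /\ 0 < complex.Re z) ->
  let D := 25 * r1 ^+ 2 - 60 * r2 in
  [/\ r1 < 0,
      0 < r2 /\ r2 <= 5 / 12 * r1 ^+ 2,
      r3 < 0 /\
      (- (1/3) * r1 ^+ 2 * Num.sqrt D + 1/225 * (D * Num.sqrt D) + 4/5 * r2 * Num.sqrt D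
         <= 10/9 * r1 ^+ 3 - 4 * r1 * r2 + 6 * r3) /\
      (10/9 * r1 ^+ 3 - 4 * r1 * r2 + 6 * r3
         <= 1/3 * r1 ^+ 2 * Num.sqrt D - 1/225 * (D * Num.sqrt D) - 4/5 * r2 * Num.sqrt D),
      0 < r4
    & r5 < 0].
Proof.
move=> hroot.
have hsz := sextic_size r1 r2 r3 r4 r5 r6.
have [h6 _] := sextic_coef r1 r2 r3 r4 r5 r6.
have hmon : sextic r1 r2 r3 r4 r5 r6 \is monic.
  by rewrite monicE /lead_coef hsz h6.
have [rs hrs] := closed_field_poly_normal (map_poly (real_complex R) (sextic r1 r2 r3 r4 r5 r6)).
rewrite lead_coef_map (monicP hmon) rmorph1 scale1r in hrs.
have hreal : forall z, z \in rs -> z = real_complex R (complex.Re z) /\ 0 < complex.Re z.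
  move=> z hz; have := hroot z; rewrite hrs root_prod_XsubC => /(_ hz) [hi hr].
  split => //; case: z hi {hz hr} => a b /= ->; done.
have hp : sextic r1 r2 r3 r4 r5 r6 = \prod_(x <- map (@complex.Re R) rs) ('X - x%:P).
  apply: (map_poly_inj (real_complex R)).
  rewrite hrs rmorph_prod big_map; apply: eq_big_seq => z hz.
  by rewrite rmorphB /= map_polyX map_polyC /= -(hreal z hz).1.
have hsz2 : size (map (@complex.Re R) rs) = 6%N.
  by move: hsz; rewrite hp size_prod_XsubC => -[].
have hpos : forall x, x \in map (@complex.Re R) rs -> 0 < x.
  by move=> x /mapP [z hz ->]; exact: (hreal z hz).2.
move: hp hsz2 hpos; case: (map (@complex.Re R) rs) => [|x1 [|x2 [|x3 [|x4 [|x5 [|x6 [|? ?]]]]]]] //= hp _ hpos.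
rewrite prod6 in hp.
have [e1 [e2 [e3 [e4 e5]]]] := sextic_inj hp.
apply: (@core R x1 x2 x3 x4 x5 x6) => //; apply: hpos; by rewrite !inE eqxx ?orbT.
Qed.
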